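(* Let $G$ be any GP 2 host graph in which every node is marked grey and is not a root, and every edge is unmarked (node and edge labels arbitrary; parallel edges and loops allowed). Then the execution of the GP 2 program is-connected on $G$ terminates, and: if $G$ is connected, it does not fail and returns a host graph isomorphic to $G$ up to marks; if $G$ is not connected, it fails. (That is, is-connected is totally correct with respect to this input/output specification.)
   Context: A graph is connected if for every pair of distinct nodes $u,v$ there is a path of edges from $u$ to $v$ regardless of edge directions (the empty graph and one-node graphs are connected). ''Isomorphic up to marks'' means isomorphic when node/edge marks (and root status) are ignored, i.e. same nodes, edges, incidences and labels. GP 2 semantics. Host graphs are finite directed graphs (parallel edges and loops allowed); every node and edge carries a label (a list of integers and strings) and a mark: nodes are unmarked or red, green, blue or grey; edges are unmarked or red, green, blue or dashed. Some nodes are roots. A rule consists of a left-hand graph $L$ and a right-hand graph $R$ sharing an interface of nodes; labels may contain variables; a rule item with mark ''any'' matches any mark. A rule is applied to a host graph by finding an injective morphism from $L$ into the host graph compatible with labels (for some instantiation of the variables) and marks, mapping roots of $L$ to roots, satisfying the dangling condition (deleted nodes must not be incident with unmatched edges) and the rule's condition; then matched items are deleted/changed/added as prescribed by $R$ (interface nodes take the mark, label and root status given in $R$). Commands: calling a rule or rule set $\{r_1,\dots,r_k\}$ applies one applicable rule and fails if none applies; $P;Q$ is sequencing; $P!$ executes $P$ repeatedly until it fails, returning the graph on which $P$ was last entered, and a break inside the loop body terminates the loop returning the current graph; ''try $C$ then $P$ else $Q$'' executes $C$ and, if $C$ succeeds, continues with $P$ on its result, otherwise executes $Q$ on the original graph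 (a missing branch means do nothing); ''if $C$ then $P$ else $Q$'' executes $C$ on a copy and then $P$ (if $C$ succeeded) or $Q$ (if $C$ failed) on the original graph; fail causes failure of the program. The program is-connected (variables x,y,z of type list; all rules keep all labels unchanged): Main = try init then (DFS!; Check); DFS = FORWARD!; try back else break; FORWARD = next_edge; {move, ignore}; Check = if match then fail. In all rules below the edge between nodes 1 and 2 is undirected: it matches a host edge in either direction, and the host edge keeps its direction. - init: a grey non-root node becomes a blue root. - match: a grey node; no change (used as a test). - next_edge: a blue root 1 and a node 2 of any mark joined by an unmarked edge; the edge becomes red. - ignore: a blue root 1 and a blue node 2 joined by a red edge; the edge becomes blue. - move: a blue root 1 and a grey node 2 joined by a red edge; node 1 becomes a non-root (still blue), node 2 becomes a blue root, the edge becomes dashed. - back: a blue non-root node 1 and a blue root 2 joined by a dashed edge; node 1 becomes a root, node 2 a non-root (still blue), the edge becomes blue. *)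

(* Defs.v *)
From Stdlib Require String.
From HB Require Import structures.
From mathcomp Require Import all_boot all_order all_algebra.
Set Implicit Arguments. Unset Strict Implicit. Unset Printing Implicit Defensive.

Inductive atom := AInt of int | AStr of String.string.
Definition label := seq atom.

Inductive nmark := NUnmarked | NRed | NGreen | NBlue | NGrey.
Inductive emark := EUnmarked | ERed | EGreen | EBlue | EDashed.

Record hgraph := HGraph {
  V : finType;
  E : finType;
  src : E -> V;
  tgt : E -> V;
  vlab : V -> label;
  elab : E -> label;
  vmark : V -> nmark;
  emk : E -> emark;
  root : V -> bool }.

Definition remark (G : hgraph) (vm : V G -> nmark) (em : E G -> emark)
  (rt : V G -> bool) : hgraph :=
  @HGraph (V G) (E G) (@src G) (@tgt G) (@vlab G) (@elab G) vm em rt.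

Definition upd (T : eqType) (A : Type) (f : T -> A) (x : T) (a : A) : T -> A :=
  fun y => if y == x then a else f y.

Definition uadj (G : hgraph) : rel (V G) :=
  fun u v => [exists e : E G, ((src e == u) && (tgt e == v))
                            || ((src e == v) && (tgt e == u))].

Definition gconnected (G : hgraph) : Prop :=
  forall u v : V G, connect (@uadj G) u v.

Definition iso_up_to_marks (G H : hgraph) : Prop :=
  exists (fV : V G -> V H) (fE : E G -> E H),
    bijective fV /\ bijective fE /\
    (forall e, src (fE e) = fV (src e)) /\
    (forall e, tgt (fE e) = fV (tgt e)) /\
    (forall v, vlab (fV v) = vlab v) /\
    (forall e, elab (fE e) = elab e).

(* All variables x,y,z are of type list, so labels impose no constraint and
   are kept unchanged.  Nodes of L that are roots must be matched to roots;
   non-root nodes of L may match any node.  Interface nodes take the mark and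
   root status given in R. *)

(* Generic two-node rule with an undirected edge between distinct nodes 1,2.
   m2 = None means "mark any" (in L and R: mark unchanged). *)
Definition erule (m1 : nmark) (r1 : bool) (m2 : option nmark) (r2 : bool)
  (me : emark) (m1' : nmark) (r1' : bool) (m2' : option nmark) (r2' : bool)
  (me' : emark) (G H : hgraph) : Prop :=
  exists (v1 v2 : V G) (e : E G),
    v1 != v2 /\
    ((src e = v1 /\ tgt e = v2) \/ (src e = v2 /\ tgt e = v1)) /\
    vmark v1 = m1 /\ (r1 ==> root v1) /\
    (if m2 is Some m then vmark v2 = m else True) /\ (r2 ==> root v2) /\
    emk e = me /\
    H = remark (upd (upd (@vmark G) v1 m1') v2
                    (if m2' is Some m then m else vmark v2))
               (upd (@emk G) e me')
               (upd (upd (@root G) v1 r1') v2 r2').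

Inductive rname := r_init | r_match | r_next_edge | r_ignore | r_move | r_back.

Definition apply_rule (r : rname) (G H : hgraph) : Prop :=
  match r with
  | r_init => exists v : V G, vmark v = NGrey /\
              H = remark (upd (@vmark G) v NBlue) (@emk G) (upd (@root G) v true)
  | r_match => exists v : V G, vmark v = NGrey /\ H = G
  | r_next_edge => erule NBlue true None false EUnmarked
                         NBlue true None false ERed G H
  | r_ignore => erule NBlue true (Some NBlue) false ERed
                      NBlue true (Some NBlue) false EBlue G H
  | r_move => erule NBlue true (Some NGrey) false ERed
                    NBlue false (Some NBlue) true EDashed G H
  | r_back => erule NBlue false (Some NBlue) true EDashed
                    NBlue true (Some NBlue) false EBlue G H
  end.

Inductive cmd :=
  | Call of seq rname            (* a rule or rule set {r1,...,rk} *)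
  | Seq of cmd & cmd
  | Loop of cmd
  | Try of cmd & cmd & cmd       (* try C then P else Q *)
  | If of cmd & cmd & cmd        (* if C then P else Q *)
  | Break
  | FailC
  | Skip.

(* Outcomes: success with a graph, failure, a pending break (with the current
   graph), or "fuel exhausted" (used to express termination). *)
Inductive result := ROk of hgraph | RFail | RBrk of hgraph | RDiv.

(* exec n P G r : some execution of P on G, where every loop may perform at
   most n further iterations (fuel), yields r.  RDiv means the fuel ran out. *)
Inductive exec : nat -> cmd -> hgraph -> result -> Prop :=
  | ex_call_ok n rs r G H : List.In r rs -> apply_rule r G H -> exec n (Call rs) G (ROk H)
  | ex_call_fail n rs G : (forall r H, List.In r rs -> ~ apply_rule r G H) ->
      exec n (Call rs) G RFail
  | ex_seq_ok n P Q G H res : exec n P G (ROk H) -> exec n Q H res -> exec n (Seq P Q) G res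
  | ex_seq_fail n P Q G : exec n P G RFail -> exec n (Seq P Q) G RFail
  | ex_seq_brk n P Q G H : exec n P G (RBrk H) -> exec n (Seq P Q) G (RBrk H)
  | ex_seq_div n P Q G : exec n P G RDiv -> exec n (Seq P Q) G RDiv
  | ex_loop_nofuel P G : exec 0 (Loop P) G RDiv
  | ex_loop_stop n P G : exec n.+1 P G RFail -> exec n.+1 (Loop P) G (ROk G)
  | ex_loop_brk n P G H : exec n.+1 P G (RBrk H) -> exec n.+1 (Loop P) G (ROk H)
  | ex_loop_div n P G : exec n.+1 P G RDiv -> exec n.+1 (Loop P) G RDiv
  | ex_loop_step n P G H res : exec n.+1 P G (ROk H) -> exec n (Loop P) H res ->
      exec n.+1 (Loop P) G res
  | ex_try_ok n C P Q G H res : exec n C G (ROk H) -> exec n P H res ->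
      exec n (Try C P Q) G res
  | ex_try_fail n C P Q G res : exec n C G RFail -> exec n Q G res ->
      exec n (Try C P Q) G res
  | ex_try_brk n C P Q G H : exec n C G (RBrk H) -> exec n (Try C P Q) G (RBrk H)
  | ex_try_div n C P Q G : exec n C G RDiv -> exec n (Try C P Q) G RDiv
  | ex_if_ok n C P Q G H res : exec n C G (ROk H) -> exec n P G res ->
      exec n (If C P Q) G res
  | ex_if_fail n C P Q G res : exec n C G RFail -> exec n Q G res ->
      exec n (If C P Q) G res
  | ex_if_brk n C P Q G H : exec n C G (RBrk H) -> exec n (If C P Q) G (RBrk H)
  | ex_if_div n C P Q G : exec n C G RDiv -> exec n (If C P Q) G RDiv
  | ex_break n G : exec n Break G (RBrk G)
  | ex_fail n G : exec n FailC G RFail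
  | ex_skip n G : exec n Skip G (ROk G).

Definition FORWARD : cmd := Seq (Call [:: r_next_edge]) (Call [:: r_move; r_ignore]).
Definition DFS : cmd := Seq (Loop FORWARD) (Try (Call [:: r_back]) Skip Break).
Definition Check : cmd := If (Call [:: r_match]) FailC Skip.
Definition is_connected : cmd := Try (Call [:: r_init]) (Seq (Loop DFS) Check) Skip.

Definition initial_graph (G : hgraph) : Prop :=
  (forall v : V G, vmark v = NGrey /\ root v = false) /\
  (forall e : E G, emk e = EUnmarked).

(* Main.v *)
Require Import Defs.
From mathcomp Require Import all_boot all_order all_algebra.
From mathcomp Require Import zify.
From Stdlib Require Import Classical.
Set Implicit Arguments. Unset Strict Implicit. Unset Printing Implicit Defensive.

Lemma call_inv n rs X r : exec n (Call rs) X r ->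
  (exists rn Y, List.In rn rs /\ apply_rule rn X Y /\ r = ROk Y) \/
  (r = RFail /\ forall rn Y, List.In rn rs -> ~ apply_rule rn X Y).
Proof. move=> h; inversion h; subst; eauto 10. Qed.

Lemma seq_inv n P Q X r : exec n (Seq P Q) X r ->
  (exists Y, exec n P X (ROk Y) /\ exec n Q Y r) \/
  (r = RFail /\ exec n P X RFail) \/
  (exists Y, r = RBrk Y /\ exec n P X (RBrk Y)) \/
  (r = RDiv /\ exec n P X RDiv).
Proof. move=> h; inversion h; subst; eauto 10. Qed.

Lemma try_inv n C P Q X r : exec n (Try C P Q) X r ->
  (exists Y, exec n C X (ROk Y) /\ exec n P Y r) \/
  (exec n C X RFail /\ exec n Q X r) \/
  (exists Y, r = RBrk Y /\ exec n C X (RBrk Y)) \/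
  (r = RDiv /\ exec n C X RDiv).
Proof. move=> h; inversion h; subst; eauto 10. Qed.

Lemma if_inv n C P Q X r : exec n (If C P Q) X r ->
  (exists Y, exec n C X (ROk Y) /\ exec n P X r) \/
  (exec n C X RFail /\ exec n Q X r) \/
  (exists Y, r = RBrk Y /\ exec n C X (RBrk Y)) \/
  (r = RDiv /\ exec n C X RDiv).
Proof. move=> h; inversion h; subst; eauto 10. Qed.

Lemma loop_inv n P X r : exec n (Loop P) X r ->
  (n = 0 /\ r = RDiv) \/
  exists m, n = m.+1 /\
   ((exec n P X RFail /\ r = ROk X) \/ (exists Y, exec n P X (RBrk Y) /\ r = ROk Y) \/
    (exec n P X RDiv /\ r = RDiv) \/ (exists Y, exec n P X (ROk Y) /\ exec m (Loop P) Y r)).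
Proof. move=> h; inversion h; subst; eauto 10. Qed.

Lemma skip_inv n X r : exec n Skip X r -> r = ROk X.
Proof. by move=> h; inversion h. Qed.
Lemma break_inv n X r : exec n Break X r -> r = RBrk X.
Proof. by move=> h; inversion h. Qed.
Lemma fail_inv n X r : exec n FailC X r -> r = RFail.
Proof. by move=> h; inversion h. Qed.

Lemma call_nobrk n rs X Y : exec n (Call rs) X (RBrk Y) -> False.
Proof. by case/call_inv => [[? [? [_ [_ //]]]]|[]]. Qed.
Lemma call_nodiv n rs X : exec n (Call rs) X RDiv -> False.
Proof. by case/call_inv => [[? [? [_ [_ //]]]]|[]]. Qed.
Lemma call1_ok n rn X Y : exec n (Call [:: rn]) X (ROk Y) -> apply_rule rn X Y.
Proof. by case/call_inv => [[? [? [[<-|[]] [h [->]]]]]|[]]. Qed.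
Lemma call1_fail n rn X : exec n (Call [:: rn]) X RFail -> forall Y, ~ apply_rule rn X Y.
Proof. case/call_inv => [[? [? [_ [_ //]]]]|[_ h]] Y; apply: h; by left. Qed.
Lemma call2_ok n r1 r2 X Y : exec n (Call [:: r1; r2]) X (ROk Y) ->
  apply_rule r1 X Y \/ apply_rule r2 X Y.
Proof. by case/call_inv => [[? [? [[<-|[<-|[]]] [h [->]]]]]|[]]; auto. Qed.
Lemma call2_fail n r1 r2 X : exec n (Call [:: r1; r2]) X RFail ->
  forall Y, ~ apply_rule r1 X Y /\ ~ apply_rule r2 X Y.
Proof. case/call_inv => [[? [? [_ [_ //]]]]|[_ h]] Y; split; apply: h; simpl; auto. Qed.

Lemma exec_total c : forall n X, exists r, exec n c X r.
Proof.
elim: c => [rs|P IHP Q IHQ|P IHP|C IHC P IHP Q IHQ|C IHC P IHP Q IHQ| | |] n X.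
- case: (classic (exists rn Y, List.In rn rs /\ apply_rule rn X Y)) => [[rn [Y [h1 h2]]]|h].
  + exists (ROk Y); exact: ex_call_ok h1 h2.
  + exists RFail; apply: ex_call_fail => rn Y h1 h2; apply: h; eauto.
- case: (IHP n X) => [[Y| |Y|] h].
  + case: (IHQ n Y) => r h'; exists r; exact: ex_seq_ok h h'.
  + exists RFail; exact: ex_seq_fail.
  + exists (RBrk Y); exact: ex_seq_brk.
  + exists RDiv; exact: ex_seq_div.
- elim: n X => [|n IHn] X; first by exists RDiv; constructor.
  case: (IHP n.+1 X) => [[Y| |Y|] h].
  + case: (IHn Y) => r h'; exists r; exact: ex_loop_step h h'.
  + exists (ROk X); exact: ex_loop_stop.
  + exists (ROk Y); exact: ex_loop_brk h.
  + exists RDiv; exact: ex_loop_div.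
- case: (IHC n X) => [[Y| |Y|] h].
  + case: (IHP n Y) => r h'; exists r; exact: ex_try_ok h h'.
  + case: (IHQ n X) => r h'; exists r; exact: ex_try_fail h h'.
  + exists (RBrk Y); exact: ex_try_brk.
  + exists RDiv; exact: ex_try_div.
- case: (IHC n X) => [[Y| |Y|] h].
  + case: (IHP n X) => r h'; exists r; exact: ex_if_ok h h'.
  + case: (IHQ n X) => r h'; exists r; exact: ex_if_fail h h'.
  + exists (RBrk Y); exact: ex_if_brk.
  + exists RDiv; exact: ex_if_div.
- exists (RBrk X); constructor.
- exists RFail; constructor.
- exists (ROk X); constructor.
Qed.


Definition joins (G : hgraph) (e : E G) (a b : V G) : Prop :=
  (src e = a /\ tgt e = b) \/ (src e = b /\ tgt e = a).

Definition inc (G : hgraph) (e : E G) (v : V G) : bool :=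
  ((src e == v) || (tgt e == v)) && (src e != tgt e).

Fixpoint spath (G : hgraph) (x : V G) (st : seq (V G * E G)) : Prop :=
  if st is (y, e) :: st' then joins e x y /\ spath y st' else True.

Lemma spath_rcons G (x : V G) st y e :
  spath x (rcons st (y, e)) <-> spath x st /\ joins e (last x (map fst st)) y.
Proof.
elim: st x => [|[z f] st IH] x /=; first by tauto.
rewrite IH; tauto.
Qed.

Lemma spath_mem G (x : V G) st f : spath x st -> f \in map snd st ->
  exists a b, a \in x :: map fst st /\ b \in x :: map fst st /\ joins f a b.
Proof.
elim: st x => [|[z g] st IH] x //= [hj hs]; rewrite inE => /orP [/eqP ->|hf].
- by exists x, z; rewrite !inE !eqxx orbT.
- case: (IH z hs hf) => a [b [ha [hb hj']]].
  exists a, b; split; last split => //.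
  + by move: ha; rewrite !inE => /orP [->|->]; rewrite ?orbT.
  + by move: hb; rewrite !inE => /orP [->|->]; rewrite ?orbT.
Qed.

Lemma joins_end G (e : E G) a b c d : joins e a b -> joins e c d -> c = a \/ c = b.
Proof. rewrite /joins; move=> [[h1 h2]|[h1 h2]] [[h3 h4]|[h3 h4]]; subst; auto. Qed.

Lemma joins_other G (e : E G) a b c : joins e a b -> joins e c b -> c = a.
Proof. rewrite /joins; move=> [[h1 h2]|[h1 h2]] [[h3 h4]|[h3 h4]]; subst; congruence. Qed.

Lemma joins_sym G (e : E G) a b : joins e a b -> joins e b a.
Proof. rewrite /joins; tauto. Qed.

Lemma joins_uadj G (e : E G) a b : joins e a b -> uadj a b.
Proof.
move=> h; apply/existsP; exists e.
by case: h => [[-> ->]|[-> ->]]; rewrite !eqxx ?orbT.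
Qed.

Lemma joins_inc G (e : E G) a b : joins e a b -> a != b -> inc e a.
Proof.
by rewrite /inc; case=> [[-> ->]|[-> ->]] hab; rewrite eqxx ?orbT /= ?hab // eq_sym.
Qed.

Definition w (m : emark) : nat :=
  match m with EUnmarked => 2 | ERed => 1 | EDashed => 1 | _ => 0 end.
Definition M (G : hgraph) (em : E G -> emark) := \sum_(e : E G) w (em e).

Lemma M_upd G (em em' : E G -> emark) e0 : (forall f, f != e0 -> em' f = em f) ->
  M em' + w (em e0) = M em + w (em' e0).
Proof.
move=> h; rewrite /M (bigD1 e0) //= [X in _ = X + _](bigD1 e0) //=.
have -> : \sum_(f | f != e0) w (em' f) = \sum_(f | f != e0) w (em f).
  by apply: eq_bigr => f /h ->.
lia.
Qed.

Record InvS (G : hgraph) (s : V G) (st : seq (V G * E G))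
  (vm : V G -> nmark) (em : E G -> emark) (rt : V G -> bool) : Prop := {
  i_col : forall v, vm v = NGrey \/ vm v = NBlue;
  i_rt : forall v, rt v = (v == last s (map fst st));
  i_red : forall e, em e <> ERed;
  i_edge : forall e, em e <> EUnmarked -> vm (src e) = NBlue /\ vm (tgt e) = NBlue;
  i_conn : forall v, vm v = NBlue -> connect (@uadj G) s v;
  i_dash : forall e, em e = EDashed <-> e \in map snd st;
  i_uniq : uniq (s :: map fst st);
  i_path : spath s st;
  i_stk : forall v, v \in s :: map fst st -> vm v = NBlue;
  i_done : forall v e, vm v = NBlue -> v \notin s :: map fst st -> inc e v -> em e <> EUnmarked;
  i_uniqe : uniq (map snd st) }.

Arguments i_col {G s st vm em rt} _ _.
Arguments i_rt {G s st vm em rt} _ _.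
Arguments i_red {G s st vm em rt} _ _.
Arguments i_edge {G s st vm em rt} _ _.
Arguments i_conn {G s st vm em rt} _ _.
Arguments i_dash {G s st vm em rt} _ _.
Arguments i_stk {G s st vm em rt} _ _.
Arguments i_done {G s st vm em rt} _ _ _.

Definition RootDone (G : hgraph) (s : V G) (st : seq (V G * E G)) (em : E G -> emark) :=
  forall e, inc e (last s (map fst st)) -> em e <> EUnmarked.


Lemma stk_rcons G (s : V G) (st : seq (V G * E G)) v e :
  s :: map fst (rcons st (v, e)) = rcons (s :: map fst st) v.
Proof. by rewrite map_rcons rcons_cons. Qed.

Lemma root_stk G (s : V G) (st : seq (V G * E G)) : last s (map fst st) \in s :: map fst st.
Proof. exact: mem_last. Qed.

Lemma InvS_push G (s : V G) st vm em rt v1 v2 e vm' em' rt' :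
  InvS s st vm em rt -> v1 = last s (map fst st) -> joins e v1 v2 ->
  vm v2 = NGrey -> em e = EUnmarked ->
  (forall v, vm' v = if v == v2 then NBlue else vm v) ->
  (forall f, em' f = if f == e then EDashed else em f) ->
  (forall v, rt' v = (v == v2)) ->
  InvS s (rcons st (v2, e)) vm' em' rt'.
Proof.
move=> inv hv1 hj hg he hvm hem hrt.
have hb1 : vm v1 = NBlue by rewrite hv1; apply: (i_stk inv); exact: root_stk.
have hv12 : v1 != v2 by apply/eqP => h; rewrite h hg in hb1.
have up : forall v, vm v = NBlue -> vm' v = NBlue.
  by move=> v hv; rewrite hvm; case: ifP.
have hv2 : vm' v2 = NBlue by rewrite hvm eqxx.
have hnd : e \notin map snd st by apply/negP => /(i_dash inv); rewrite he.
have hns : v2 \notin s :: map fst st by apply/negP => /(i_stk inv); rewrite hg.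
split.
- move=> v; rewrite hvm; case: ifP => _; [by right | exact: (i_col inv)].
- by move=> v; rewrite hrt map_rcons last_rcons.
- by move=> f; rewrite hem; case: ifP => _ //; apply: (i_red inv).
- move=> f; rewrite hem; case: (eqVneq f e) => [hfe|hfe] h; [subst f|].
  + have hb1' : vm' v1 = NBlue by apply: up.
    by case: hj => [[-> ->]|[-> ->]]; split.
  + by move: h => /(i_edge inv) [h1 h2]; split; apply: up.
- move=> v; rewrite hvm; case: (eqVneq v v2) => [->|_] hv; last exact: (i_conn inv).
  apply: connect_trans (i_conn inv _ hb1) _; apply: connect1; exact: joins_uadj hj.
- move=> f; rewrite hem map_rcons mem_rcons inE; case: (eqVneq f e) => [hfe|hfe] /=; [subst f|].
  + by split.
  + exact: (i_dash inv).
- by rewrite stk_rcons rcons_uniq hns (i_uniq inv).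
- by apply/spath_rcons; split; [exact: (i_path inv) | rewrite -hv1].
- move=> v; rewrite stk_rcons mem_rcons inE => /orP [/eqP ->//|/(i_stk inv)]; exact: up.
- move=> v f; rewrite stk_rcons mem_rcons inE negb_or hvm => hb /andP [hnv hnin] hinc.
  rewrite (negbTE hnv) in hb; rewrite hem; case: ifP => _ //.
  exact: (i_done inv _ _ hb hnin hinc).
- by rewrite map_rcons rcons_uniq hnd (i_uniqe inv).
Qed.

Lemma InvS_ign G (s : V G) st vm em rt v1 v2 e vm' em' rt' :
  InvS s st vm em rt -> v1 = last s (map fst st) -> joins e v1 v2 ->
  vm v2 = NBlue -> em e = EUnmarked ->
  (forall v, vm' v = vm v) ->
  (forall f, em' f = if f == e then EBlue else em f) ->
  (forall v, rt' v = rt v) ->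
  InvS s st vm' em' rt'.
Proof.
move=> inv hv1 hj hg he hvm hem hrt.
have hb1 : vm v1 = NBlue by rewrite hv1; apply: (i_stk inv); exact: root_stk.
have hnd : e \notin map snd st by apply/negP => /(i_dash inv); rewrite he.
split.
- move=> v; rewrite hvm; exact: (i_col inv).
- by move=> v; rewrite hrt (i_rt inv).
- by move=> f; rewrite hem; case: ifP => _ //; apply: (i_red inv).
- move=> f; rewrite hem !hvm; case: (eqVneq f e) => [hfe|hfe] h; [subst f|].
  + by case: hj => [[-> ->]|[-> ->]]; split.
  + exact: (i_edge inv _ h).
- move=> v; rewrite hvm; exact: (i_conn inv).
- move=> f; rewrite hem; case: (eqVneq f e) => [hfe|hfe] /=; [subst f|].
  + by split => // h; rewrite h in hnd.
  + exact: (i_dash inv).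
- exact: (i_uniq inv).
- exact: (i_path inv).
- move=> v; rewrite hvm; exact: (i_stk inv).
- move=> v f; rewrite hvm hem => hb hnin hinc; case: ifP => _ //.
  exact: (i_done inv _ _ hb hnin hinc).
- exact: (i_uniqe inv).
Qed.

Lemma InvS_back G (s : V G) st0 u e vm em rt vm' em' rt' :
  InvS s (rcons st0 (u, e)) vm em rt -> RootDone s (rcons st0 (u, e)) em ->
  (forall v, vm' v = vm v) ->
  (forall f, em' f = if f == e then EBlue else em f) ->
  (forall v, rt' v = (v == last s (map fst st0))) ->
  InvS s st0 vm' em' rt'.
Proof.
move=> inv hrd hvm hem hrt.
have hu := i_uniq inv; rewrite stk_rcons rcons_uniq in hu; case/andP: hu => hun hu.
have hue := i_uniqe inv; rewrite map_rcons rcons_uniq in hue; case/andP: hue => hen hue.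
have hp := i_path inv; case/spath_rcons: hp => hp hj.
split.
- move=> v; rewrite hvm; exact: (i_col inv).
- exact: hrt.
- by move=> f; rewrite hem; case: ifP => _ //; apply: (i_red inv).
- move=> f; rewrite hem !hvm; case: (eqVneq f e) => [hfe|hfe] h; [subst f|].
  + apply: (i_edge inv); suff -> : em e = EDashed by [].
    by apply (i_dash inv); rewrite map_rcons mem_rcons mem_head.
  + exact: (i_edge inv).
- move=> v; rewrite hvm; exact: (i_conn inv).
- move=> f; rewrite hem; case: (eqVneq f e) => [hfe|hfe] /=; [subst f|].
  + by split => // h; rewrite h in hen.
  + rewrite (i_dash inv) map_rcons mem_rcons inE (negbTE hfe) //.
- exact: hu.
- exact: hp.
- move=> v hv; rewrite hvm; apply: (i_stk inv); rewrite stk_rcons mem_rcons inE hv orbT //.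
- move=> v f; rewrite hvm hem => hb hnin hinc; case: ifP => _ //.
  case: (eqVneq v u) => [hvu|hvu].
  + apply: hrd; rewrite map_rcons last_rcons -hvu //.
  + apply: (i_done inv _ _ hb) => //; rewrite stk_rcons mem_rcons inE negb_or hvu //.
- exact: hue.
Qed.


From Stdlib Require Import FunctionalExtensionality.

Lemma next_edge_char G (s : V G) st vm em rt Y :
  InvS s st vm em rt -> apply_rule r_next_edge (@remark G vm em rt) Y ->
  exists v2 e, joins e (last s (map fst st)) v2 /\ last s (map fst st) != v2 /\
    em e = EUnmarked /\ Y = @remark G vm (upd em e ERed) rt.
Proof.
move=> inv [v1 [v2 [e [hne [hj [hm1 [hr1 [_ [_ [he hY]]]]]]]]]].
simpl in *.
have hv1 : v1 = last s (map fst st) by apply/eqP; rewrite -(i_rt inv).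
subst v1.
exists v2, e; split; first exact: hj.
split; first exact: hne.
split; first exact: he.
rewrite hY; congr remark.
- apply: functional_extensionality => v; rewrite /upd.
  case: eqP => [->|_] //; case: eqP => [->|_] //; by rewrite hm1.
- apply: functional_extensionality => v; rewrite /upd (i_rt inv).
  case: eqP => [->|_]; first by rewrite eq_sym (negbTE hne).
  by case: eqP.
Qed.

Lemma move_char G (s : V G) st vm em rt v2 e Y :
  InvS s st vm em rt -> joins e (last s (map fst st)) v2 -> last s (map fst st) != v2 ->
  em e = EUnmarked -> apply_rule r_move (@remark G vm (upd em e ERed) rt) Y ->
  vm v2 = NGrey /\ exists vm' em' rt', Y = @remark G vm' em' rt' /\
   (forall v, vm' v = if v == v2 then NBlue else vm v) /\
   (forall f, em' f = if f == e then EDashed else em f) /\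
   (forall v, rt' v = (v == v2)).
Proof.
move=> inv hj hne he [w1 [w2 [f [hne' [hj' [hm1 [hr1 [hm2 [_ [hf hY]]]]]]]]]].
simpl in *.
have hw1 : w1 = last s (map fst st) by apply/eqP; rewrite -(i_rt inv).
subst w1.
have hfe : f = e.
  move: hf; rewrite /upd; case: eqP => [//|_ h]; exfalso; exact: (i_red inv f h).
subst f.
have hw2 : w2 = v2 by apply: (joins_other (joins_sym hj) (joins_sym hj')).
subst w2.
split; first exact: hm2.
eexists _, _, _; split; first exact: hY.
split; last split.
- move=> v; rewrite /upd; case: eqP => // _; case: eqP => // ->; by rewrite hm1.
- by move=> g; rewrite /upd; case: eqP.
- move=> v; rewrite /upd (i_rt inv); case: eqP => [_|_] //; by case: eqP.
Qed.

Lemma ign_char G (s : V G) st vm em rt v2 e Y :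
  InvS s st vm em rt -> joins e (last s (map fst st)) v2 -> last s (map fst st) != v2 ->
  em e = EUnmarked -> apply_rule r_ignore (@remark G vm (upd em e ERed) rt) Y ->
  vm v2 = NBlue /\ exists vm' em' rt', Y = @remark G vm' em' rt' /\
   (forall v, vm' v = vm v) /\
   (forall f, em' f = if f == e then EBlue else em f) /\
   (forall v, rt' v = rt v).
Proof.
move=> inv hj hne he [w1 [w2 [f [hne' [hj' [hm1 [hr1 [hm2 [_ [hf hY]]]]]]]]]].
simpl in *.
have hw1 : w1 = last s (map fst st) by apply/eqP; rewrite -(i_rt inv).
subst w1.
have hfe : f = e.
  move: hf; rewrite /upd; case: eqP => [//|_ h]; exfalso; exact: (i_red inv f h).
subst f.
have hw2 : w2 = v2 by apply: (joins_other (joins_sym hj) (joins_sym hj')).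
subst w2.
split; first exact: hm2.
eexists _, _, _; split; first exact: hY.
split; last split.
- move=> v; rewrite /upd; case: eqP => [->|_]; first by rewrite hm2.
  case: eqP => // ->; by rewrite hm1.
- by move=> g; rewrite /upd; case: eqP.
- move=> v; rewrite /upd !(i_rt inv); case: eqP => [->|_]; first by rewrite eq_sym (negbTE hne).
  by case: eqP.
Qed.

Lemma moveign_exists G (s : V G) st vm em rt v2 e :
  InvS s st vm em rt -> joins e (last s (map fst st)) v2 -> last s (map fst st) != v2 ->
  em e = EUnmarked ->
  exists Y, apply_rule r_move (@remark G vm (upd em e ERed) rt) Y \/
            apply_rule r_ignore (@remark G vm (upd em e ERed) rt) Y.
Proof.
move=> inv hj hne he.
have hb : vm (last s (map fst st)) = NBlue by apply: (i_stk inv); exact: root_stk.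
have hr : rt (last s (map fst st)) by rewrite (i_rt inv).
case: (i_col inv v2) => hc.
- eexists; left; exists (last s (map fst st)), v2, e; simpl.
  do 6 (split; first by []).
  split; first by rewrite /upd eqxx.
  reflexivity.
- eexists; right; exists (last s (map fst st)), v2, e; simpl.
  do 6 (split; first by []).
  split; first by rewrite /upd eqxx.
  reflexivity.
Qed.

Lemma next_edge_exists G (s : V G) st vm em rt e :
  InvS s st vm em rt -> inc e (last s (map fst st)) -> em e = EUnmarked ->
  exists Y, apply_rule r_next_edge (@remark G vm em rt) Y.
Proof.
move=> inv hinc he.
have hb : vm (last s (map fst st)) = NBlue by apply: (i_stk inv); exact: root_stk.
have hr : rt (last s (map fst st)) by rewrite (i_rt inv).
case/andP: hinc => /orP [/eqP hs|/eqP ht] hne.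
- eexists; exists (last s (map fst st)), (tgt e), e; simpl.
  split; first by rewrite -hs.
  split; first by left.
  do 5 (split; first by []).
  reflexivity.
- eexists; exists (last s (map fst st)), (src e), e; simpl.
  split; first by rewrite -ht eq_sym.
  split; first by right.
  do 5 (split; first by []).
  reflexivity.
Qed.

Lemma back_char G (s : V G) st vm em rt Y :
  InvS s st vm em rt -> apply_rule r_back (@remark G vm em rt) Y ->
  exists st0 u e, st = rcons st0 (u, e) /\ exists vm' em' rt', Y = @remark G vm' em' rt' /\
    (forall v, vm' v = vm v) /\ (forall f, em' f = if f == e then EBlue else em f) /\
    (forall v, rt' v = (v == last s (map fst st0))).
Proof.
move=> inv [v1 [v2 [e [hne [hj [hm1 [_ [hm2 [hr2 [he hY]]]]]]]]]].
simpl in *.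
have hv2 : v2 = last s (map fst st) by apply/eqP; rewrite -(i_rt inv).
have hin : e \in map snd st by apply/(i_dash inv).
move: inv hv2 hin; case/lastP: st => [|st0 [u e0]] inv hv2 hin; first by [].
exists st0, u, e0.
rewrite map_rcons last_rcons /= in hv2; subst v2.
have hu := i_uniq inv; rewrite stk_rcons rcons_uniq in hu; case/andP: hu => hun hu.
case/spath_rcons: (i_path inv) => hp hj0.
have hee : e = e0.
  move: hin; rewrite map_rcons mem_rcons inE => /orP [/eqP //|hin].
  case: (spath_mem hp hin) => a [b [ha [hb hjab]]].
  by case: (joins_end hjab (joins_sym hj)) => hua; rewrite -hua in ha hb; rewrite ?ha ?hb in hun.
subst e0.
have hv1 : v1 = last s (map fst st0) by apply: (joins_other hj0 hj).
split; first by [].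
eexists _, _, _; split; first exact: hY.
split; last split.
- move=> v; rewrite /upd; case: eqP => [->|_]; first by rewrite hm2.
  case: eqP => // ->; by rewrite hm1.
- by [].
- move=> v; rewrite /upd (i_rt inv) map_rcons last_rcons /= -hv1.
  case: eqP => [->|hvu]; first by rewrite eq_sym (negbTE hne).
  by case: eqP.
Qed.

Lemma back_exists G (s : V G) st0 u e vm em rt :
  InvS s (rcons st0 (u, e)) vm em rt -> exists Y, apply_rule r_back (@remark G vm em rt) Y.
Proof.
move=> inv.
have hu := i_uniq inv; rewrite stk_rcons rcons_uniq in hu; case/andP: hu => hun hu.
case/spath_rcons: (i_path inv) => hp hj0.
eexists; exists (last s (map fst st0)), u, e; simpl.
split; first by apply/eqP => h; rewrite -h root_stk in hun.
split; first exact: hj0.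
split; first by apply: (i_stk inv); rewrite stk_rcons mem_rcons inE root_stk orbT.
split; first by [].
split; first by apply: (i_stk inv); rewrite stk_rcons mem_rcons mem_head.
split; first by rewrite (i_rt inv) map_rcons last_rcons eqxx.
split; first by apply/(i_dash inv); rewrite map_rcons mem_rcons mem_head.
reflexivity.
Qed.


Lemma call2_inv n r1 r2 X r : exec n (Call [:: r1; r2]) X r ->
  (exists Y, r = ROk Y /\ (apply_rule r1 X Y \/ apply_rule r2 X Y)) \/
  (r = RFail /\ forall Y, ~ apply_rule r1 X Y /\ ~ apply_rule r2 X Y).
Proof.
case/call_inv => [[rn [Y [hin [ha ->]]]]|[-> h]].
- left; exists Y; split => //; case: hin => [h|[h|[]]]; subst; auto.
- right; split => // Y; split; apply: h; simpl; auto.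
Qed.

Lemma forward_step G (s : V G) n X r st vm em rt :
  exec n FORWARD X r -> X = @remark G vm em rt -> InvS s st vm em rt ->
  (r = RFail /\ RootDone s st em) \/
  (exists st' vm' em' rt', r = ROk (@remark G vm' em' rt') /\ InvS s st' vm' em' rt' /\ M em' < M em).
Proof.
move=> hex hX inv; subst X.
case/seq_inv: hex => [[Y [h1 h2]] | [[-> h1] | [[Y [-> h1]] | [-> h1]]]].
- move/call1_ok: h1 => /(next_edge_char inv) [v2 [e [hj [hne [he hY]]]]]; subst Y.
  case/call2_inv: h2 => [[Y [-> [hm|hi]]] | [-> hf]].
  + case: (move_char inv hj hne he hm) => hg [vm' [em' [rt' [-> [hvm [hem hrt]]]]]].
    right; exists (rcons st (v2, e)), vm', em', rt'; split; first by [].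
    split; first exact: (InvS_push inv erefl hj hg he hvm hem hrt).
    have hM : M em' + w (em e) = M em + w (em' e).
      by apply: M_upd => f hf; rewrite hem (negbTE hf).
    rewrite hem eqxx he /= in hM; lia.
  + case: (ign_char inv hj hne he hi) => hg [vm' [em' [rt' [-> [hvm [hem hrt]]]]]].
    right; exists st, vm', em', rt'; split; first by [].
    split; first exact: (InvS_ign inv erefl hj hg he hvm hem hrt).
    have hM : M em' + w (em e) = M em + w (em' e).
      by apply: M_upd => f hf; rewrite hem (negbTE hf).
    rewrite hem eqxx he /= in hM; lia.
  + exfalso; case: (moveign_exists inv hj hne he) => Y [h|h].
    * exact: (hf Y).1 h.
    * exact: (hf Y).2 h.
- left; split => // e hinc hu.
  case: (next_edge_exists inv hinc hu) => Y hY; exact: (call1_fail h1 hY).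
- by case: (call_nobrk h1).
- by case: (call_nodiv h1).
Qed.

Lemma forward_loop G (s : V G) f : forall X r st vm em rt,
  exec f (Loop FORWARD) X r -> X = @remark G vm em rt -> InvS s st vm em rt -> M em < f ->
  exists st' vm' em' rt', r = ROk (@remark G vm' em' rt') /\ InvS s st' vm' em' rt' /\
    M em' <= M em /\ RootDone s st' em'.
Proof.
elim: f => [|f IH] X r st vm em rt hex hX inv hM; first by [].
case/loop_inv: hex => [[//]|[m [hm hcase]]].
case: hm => ?; subst m.
case: hcase => [[hb ->] | [[Y [hb ->]] | [[hb ->] | [Y [hb hl]]]]].
- case: (forward_step hb hX inv) => [[_ hrd]|[? [? [? [? [//]]]]]].
  by subst X; exists st, vm, em, rt.
- by case: (forward_step hb hX inv) => [[//]|[? [? [? [? [//]]]]]].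
- by case: (forward_step hb hX inv) => [[//]|[? [? [? [? [//]]]]]].
- case: (forward_step hb hX inv) => [[//]|[st1 [vm1 [em1 [rt1 [[hY] [inv1 hM1]]]]]]].
  have hM1' : M em1 < f by lia.
  case: (IH Y r st1 vm1 em1 rt1 hl hY inv1 hM1') => st' [vm' [em' [rt' [-> [inv' [hM' hrd]]]]]].
  exists st', vm', em', rt'; split => //; split => //; split => //; lia.
Qed.

Record Fin (G : hgraph) (s : V G) (vm : V G -> nmark) (em : E G -> emark) : Prop := {
  f_col : forall v, vm v = NGrey \/ vm v = NBlue;
  f_edge : forall e, em e <> EUnmarked -> vm (src e) = NBlue /\ vm (tgt e) = NBlue;
  f_conn : forall v, vm v = NBlue -> connect (@uadj G) s v;
  f_done : forall v e, vm v = NBlue -> inc e v -> em e <> EUnmarked;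
  f_s : vm s = NBlue }.
Arguments f_col {G s vm em} _ _.
Arguments f_edge {G s vm em} _ _.
Arguments f_conn {G s vm em} _ _.
Arguments f_done {G s vm em} _ _ _.

Lemma fin_of G (s : V G) vm em rt :
  InvS s [::] vm em rt -> RootDone s [::] em -> Fin s vm em.
Proof.
move=> inv hrd; split.
- exact: (i_col inv).
- exact: (i_edge inv).
- exact: (i_conn inv).
- move=> v e hb hinc; case: (eqVneq v s) => [hvs|hvs].
  + by apply: hrd; rewrite /= -hvs.
  + by apply: (i_done inv _ _ hb) => //; rewrite inE.
- by apply: (i_stk inv); rewrite inE.
Qed.

Lemma dfs_step G (s : V G) k X r st vm em rt :
  exec k.+1 DFS X r -> X = @remark G vm em rt -> InvS s st vm em rt -> M em < k.+1 ->
  (exists vm' em' rt', r = RBrk (@remark G vm' em' rt') /\ Fin s vm' em') \/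
  (exists st' vm' em' rt', r = ROk (@remark G vm' em' rt') /\ InvS s st' vm' em' rt' /\ M em' < M em).
Proof.
move=> hex hX inv hM.
case/seq_inv: hex => [[Y [h1 h2]] | [[-> h1] | [[Y [-> h1]] | [-> h1]]]].
- case: (forward_loop h1 hX inv hM) => st1 [vm1 [em1 [rt1 [[hY] [inv1 [hM1 hrd]]]]]].
  case/try_inv: h2 => [[Z [hb hs]] | [[hf hb] | [[Z [-> hb]] | [-> hb]]]].
  + move/call1_ok: hb; rewrite hY => /(back_char inv1) [st0 [u [e [hst [vm' [em' [rt' [hZ [hvm [hem hrt]]]]]]]]]].
    subst st1 Z; rewrite (skip_inv hs).
    right; exists st0, vm', em', rt'; split => //.
    split; first exact: (InvS_back inv1 hrd hvm hem hrt).
    have hM' : M em' + w (em1 e) = M em1 + w (em' e).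
      by apply: M_upd => f hf; rewrite hem (negbTE hf).
    have hd : em1 e = EDashed by apply (i_dash inv1); rewrite map_rcons mem_rcons mem_head.
    rewrite hem eqxx hd /= in hM'; lia.
  + rewrite (break_inv hb) hY; left; exists vm1, em1, rt1; split => //.
    move: inv1 hrd hf; case/lastP: st1 => [|st0 [u e]] inv1 hrd hf.
    * exact: (fin_of inv1 hrd).
    * case: (back_exists inv1) => Z hZ; exfalso; apply: (call1_fail hf); rewrite hY; exact: hZ.
  + by case: (call_nobrk hb).
  + by case: (call_nodiv hb).
- by case: (forward_loop h1 hX inv hM) => ? [? [? [? [//]]]].
- by case: (forward_loop h1 hX inv hM) => ? [? [? [? [//]]]].
- by case: (forward_loop h1 hX inv hM) => ? [? [? [? [//]]]].
Qed.

Lemma dfs_loop G (s : V G) k : forall X r st vm em rt,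
  exec k (Loop DFS) X r -> X = @remark G vm em rt -> InvS s st vm em rt -> M em < k ->
  exists vm' em' rt', r = ROk (@remark G vm' em' rt') /\ Fin s vm' em'.
Proof.
elim: k => [|k IH] X r st vm em rt hex hX inv hM; first by [].
case/loop_inv: hex => [[//]|[m [hm hcase]]].
case: hm => ?; subst m.
case: hcase => [[hb ->] | [[Y [hb ->]] | [[hb ->] | [Y [hb hl]]]]].
- by case: (dfs_step hb hX inv hM) => [[? [? [? [//]]]]|[? [? [? [? [//]]]]]].
- case: (dfs_step hb hX inv hM) => [[vm' [em' [rt' [[->] hf]]]]|[? [? [? [? [//]]]]]].
  by exists vm', em', rt'.
- by case: (dfs_step hb hX inv hM) => [[? [? [? [//]]]]|[? [? [? [? [//]]]]]].
- case: (dfs_step hb hX inv hM) => [[? [? [? [//]]]]|[st1 [vm1 [em1 [rt1 [[hY] [inv1 hM1]]]]]]].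
  apply: (IH Y r st1 vm1 em1 rt1 hl hY inv1); lia.
Qed.


Lemma blue_step G (s : V G) vm em x y :
  Fin s vm em -> vm x = NBlue -> uadj x y -> vm y = NBlue.
Proof.
move=> fin hx /existsP [e /orP [/andP [/eqP hs /eqP ht] | /andP [/eqP hs /eqP ht]]];
  (have [hxy|hxy] := eqVneq x y; first by rewrite -hxy).
- have hinc : inc e x by rewrite /inc hs ht eqxx /= hxy.
  by case: (f_edge fin _ (f_done fin _ _ hx hinc)); rewrite ht.
- have hinc : inc e x by rewrite /inc hs ht eqxx orbT /= eq_sym hxy.
  by case: (f_edge fin _ (f_done fin _ _ hx hinc)); rewrite hs.
Qed.

Lemma blue_closed G (s : V G) vm em v :
  Fin s vm em -> connect (@uadj G) s v -> vm v = NBlue.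
Proof.
move=> fin /connectP [p hp ->].
suff gen : forall x q, vm x = NBlue -> path (@uadj G) x q -> vm (last x q) = NBlue.
  exact: (gen s p (f_s fin) hp).
move=> x q; elim: q x => [|y q IH] x //= hx /andP [hxy hq].
exact: (IH y (blue_step fin hx hxy) hq).
Qed.

Lemma uadj_sym G : symmetric (@uadj G).
Proof. by move=> x y; rewrite /uadj; apply: eq_existsb => e; rewrite orbC. Qed.

Lemma iso_self G vm em rt : iso_up_to_marks G (@remark G vm em rt).
Proof.
exists (fun v => v), (fun e => e).
split; first by exists (fun v => v).
split; first by exists (fun v => v).
by do 3 (split; first by []).
Qed.

Theorem mainTheorem1 (G : hgraph) :
  initial_graph G ->
  exists n : nat,
    (exists res, exec n is_connected G res) /\
    (forall res, exec n is_connected G res ->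
       res <> RDiv /\
       (gconnected G -> exists H, res = ROk H /\ iso_up_to_marks G H) /\
       (~ gconnected G -> res = RFail)).
Proof.
move=> [hv he].
exists (M (@emk G)).+1.
split; first exact: exec_total.
move=> res hex.
case/try_inv: hex => [[X [h1 h2]] | [[h1 h2] | [[Y [-> h1]] | [-> h1]]]].
- move/call1_ok: h1 => [s [hs hX]].
  have inv : InvS s [::] (upd (@vmark G) s NBlue) (@emk G) (upd (@Defs.root G) s true).
    split => //=.
    + by move=> v; rewrite /upd; case: eqP => _; [right|left; case: (hv v)].
    + by move=> v; rewrite /upd; case: eqP => [_|_] //; case: (hv v).
    + by move=> e; rewrite he.
    + move=> v; rewrite /upd; case: eqP => [-> _|_]; first exact: connect0.
      by case: (hv v) => ->.
    + by move=> e; rewrite he.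
    + by move=> v; rewrite inE => /eqP ->; rewrite /upd eqxx.
    + move=> v e; rewrite /upd inE; case: eqP => [->|_] //; by case: (hv v) => ->.
  case/seq_inv: h2 => [[Y [h3 h4]] | [[-> h3] | [[Y [-> h3]] | [-> h3]]]].
  + case: (dfs_loop h3 hX inv (ltnSn _)) => vm' [em' [rt' [[hY] fin]]]; subst Y.
    case/if_inv: h4 => [[Z [hm hf]] | [[hm hs'] | [[Z [-> hm]] | [-> hm]]]].
    * rewrite (fail_inv hf); move/call1_ok: hm => [v [hg _]].
      split => //; split => // hc; exfalso.
      have := blue_closed fin (hc s v); simpl in hg; rewrite hg //.
    * rewrite (skip_inv hs').
      have hall : forall v, vm' v = NBlue.
        move=> v; case: (f_col fin v) => // hg; exfalso.
        by apply: (call1_fail hm (Y := @remark G vm' em' rt')); exists v.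
      have hc : gconnected G.
        move=> u v; apply: (connect_trans (y := s)).
        * by rewrite (sym_connect_sym (@uadj_sym G)); apply: (f_conn fin).
        * exact: (f_conn fin).
      split => //; split => // _; eexists; split; first reflexivity; exact: iso_self.
    * by case: (call_nobrk hm).
    * by case: (call_nodiv hm).
  + by case: (dfs_loop h3 hX inv (ltnSn _)) => ? [? [? [//]]].
  + by case: (dfs_loop h3 hX inv (ltnSn _)) => ? [? [? [//]]].
  + by case: (dfs_loop h3 hX inv (ltnSn _)) => ? [? [? [//]]].
- rewrite (skip_inv h2).
  have hc : gconnected G.
    move=> u v; exfalso.
    apply: (call1_fail h1 (Y := @remark G (upd (@vmark G) u NBlue) (@emk G) (upd (@Defs.root G) u true))).
    by exists u; split; [case: (hv u)|].
  split => //; split => // _; exists G; split => //.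
  exists (fun v => v), (fun e => e).
  split; first by exists (fun v => v).
  split; first by exists (fun v => v).
  by do 3 (split; first by []).
- by case: (call_nobrk h1).
- by case: (call_nodiv h1).
Qed.
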